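(* Let $d$ be a positive integer, let $\mathcal{T}_{d+1}$ be the $(d+1)$-regular tree with a fixed origin $0$, and let $\delta_0$ be the function on $\mathcal{T}_{d+1}$ equal to $1$ at $0$ and $0$ elsewhere. Let $n$ be a positive even integer. Then for $x\in\mathcal{T}_{d+1}$, writing $|x|$ for the distance from $x$ to $0$, $$P_n(T_d/2)\delta_0(x)=\begin{cases}0 & |x| \text{ odd or } |x|>n,\\[2pt] \dfrac{1-d}{2d^{n/2}} & |x|<n \text{ and } |x| \text{ even},\\[4pt] \dfrac{1}{2d^{n/2}} & |x|=n.\end{cases}$$ In particular, $|P_n(T_d/2)\delta_0(x)|\lesssim d^{-n/2}$ for all $x$ (with implied constant depending only on $d$).
   Context: $T_d$ is the operator on functions on $\mathcal{T}_{d+1}$ given by $T_d f(x)=\frac{1}{\sqrt d}\sum_{y:\operatorname{dist}(x,y)=1}f(y)$. $P_n$ is the Chebyshev polynomial of the first kind of degree $n$, defined by $P_n(\cos\theta)=\cos n\theta$, and $P_n(T_d/2)$ is the corresponding polynomial in the operator $T_d/2$. *)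

(* Defs.v *)
From HB Require Import structures.
From mathcomp Require Import all_boot all_order all_algebra.
Set Implicit Arguments. Unset Strict Implicit. Unset Printing Implicit Defensive.
Import Order.TTheory GRing.Theory Num.Theory.
Local Open Scope ring_scope.

(* A vertex is a reduced word: [::] is the root; a vertex at distance k >= 1
   is a sequence [:: a_1; ...; a_k] with a_1 < d+1 and a_i < d for i >= 2
   (a_i indexes the child chosen at step i). *)
Definition tree_vertex (d : nat) (s : seq nat) : bool :=
  match s with
  | [::] => true
  | a :: t => (a < d.+1)%N && all (fun b => (b < d)%N) t
  end.

Definition parent (s : seq nat) : seq nat := take (size s).-1 s.

Definition nbrs (d : nat) (x : seq nat) : seq (seq nat) :=
  (if x is [::] then [::] else [:: parent x]) ++
  [seq rcons x i | i <- iota 0 (if x is [::] then d.+1 else d)].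

(* Functions on the tree are represented as functions on seq nat
   (only values at tree vertices matter). *)
Definition Td {R : rcfType} (d : nat) (f : seq nat -> R) : seq nat -> R :=
  fun x => (Num.sqrt (d%:R))^-1 * \sum_(y <- nbrs d x) f y.

Definition delta0 {R : rcfType} : seq nat -> R :=
  fun x => if x == [::] then 1 else 0.

(* Chebyshev polynomials of the first kind: P_0 = 1, P_1 = X,
   P_{n+2} = 2 X P_{n+1} - P_n  (equivalently P_n(cos t) = cos (n t)). *)
Fixpoint cheb_pair {R : nzRingType} (n : nat) : {poly R} * {poly R} :=
  match n with
  | 0 => (1, 'X)
  | m.+1 => let p := cheb_pair m in (p.2, 2%:R *: 'X * p.2 - p.1)
  end.
Definition cheb {R : nzRingType} (n : nat) : {poly R} := (cheb_pair n).1.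

Definition poly_op {R : rcfType} (p : {poly R})
  (A : (seq nat -> R) -> (seq nat -> R)) (f : seq nat -> R) : seq nat -> R :=
  fun x => \sum_(i < size p) p`_i * iter i A f x.

Definition cheb_Td_delta {R : rcfType} (d n : nat) : seq nat -> R :=
  poly_op (cheb n) (fun f x => Td d f x / 2%:R) delta0.

(* Main.v *)
Require Import Defs.
From HB Require Import structures.
From mathcomp Require Import all_boot all_order all_algebra.
From mathcomp Require Import ring lra zify.
Import Order.TTheory GRing.Theory Num.Theory.
Local Open Scope ring_scope.

Lemma tv_rcons d x i : tree_vertex d x -> x != [::] -> (i < d)%N ->
  tree_vertex d (rcons x i).
Proof. by case: x => //= a t /andP[ha ht] _ hi; rewrite ha all_rcons hi ht. Qed.

Lemma tv_parent d x : tree_vertex d x -> tree_vertex d (parent x).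
Proof.
case/lastP: x => // p z.
rewrite /parent size_rcons /= -cats1 take_size_cat //.
case: p => //= a t; rewrite all_cat /= => /andP[ha /andP[ht _]].
by rewrite ha ht.
Qed.

Lemma Td_ext (R : rcfType) d (f g : seq nat -> R) x :
  (forall y, f y = g y) -> Td d f x = Td d g x.
Proof. by move=> h; rewrite /Td; congr (_ * _); apply: eq_bigr => y _. Qed.

Lemma Td_lin (R : rcfType) d N (c : nat -> R) (h : nat -> seq nat -> R) x :
  Td d (fun y => \sum_(i < N) c i * h i y) x = \sum_(i < N) c i * Td d (h i) x.
Proof.
rewrite /Td exchange_big mulr_sumr; apply: eq_bigr => i _.
rewrite !mulr_sumr; apply: eq_bigr => y _; by rewrite mulrCA.
Qed.

Lemma Td_radial (R : rcfType) d (f : seq nat -> R) g x :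
  tree_vertex d x -> (forall y, tree_vertex d y -> f y = g (size y)) ->
  Td d f x = (Num.sqrt (d%:R : R))^-1 *
    (if x is [::] then d.+1%:R * g 1%N else g (size x).-1 + d%:R * g (size x).+1).
Proof.
move=> hx hf; rewrite /Td /nbrs; congr (_ * _).
case: x hx => [|a t] hx.
  rewrite cat0s big_map (eq_big_seq (fun=> g 1%N)); last first.
    move=> i; rewrite mem_iota add0n => /andP[_ hi]; by rewrite hf //= andbT.
  by rewrite big_const_seq count_predT size_iota iter_addr_0 mulr_natl.
rewrite big_cat big_seq1 big_map hf; last exact: tv_parent.
rewrite (eq_big_seq (fun=> g (size t).+2)); last first.
  move=> i; rewrite mem_iota add0n => /andP[_ hi].
  by rewrite hf ?size_rcons //; apply: tv_rcons.
rewrite /=.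
rewrite big_const_seq count_predT size_iota iter_addr_0 mulr_natl.
by rewrite /parent size_take /= ltnSn.
Qed.

Lemma poly_opE (R : rcfType) (p : {poly R}) A f x N : (size p <= N)%N ->
  poly_op p A f x = \sum_(i < N) p`_i * iter i A f x.
Proof.
move=> hN; rewrite /poly_op (big_ord_widen _ (fun i => p`_i * iter i A f x) hN).
rewrite [RHS](bigID (fun i : 'I_N => (i < size p)%N)) /= [X in _ = _ + X]big1 ?addr0 //.
by move=> i; rewrite -leqNgt => hi; rewrite nth_default // mul0r.
Qed.

Lemma cheb_rec (R : rcfType) n :
  cheb (R := R) n.+2 = 2%:R *: 'X * cheb n.+1 - cheb n.
Proof. by []. Qed.

Definition Aop (R : rcfType) d := fun (f : seq nat -> R) x => Td d f x / 2%:R.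

Lemma Q_rec (R : rcfType) d n x :
  cheb_Td_delta (R := R) d n.+2 x =
  Td d (cheb_Td_delta d n.+1) x - cheb_Td_delta d n x.
Proof.
set N := maxn (size (cheb (R := R) n.+1)) (size (cheb (R := R) n)).
have h1 : (size (cheb (R := R) n.+1) <= N)%N by rewrite leq_maxl.
have h0 : (size (cheb (R := R) n) <= N)%N by rewrite leq_maxr.
have h2 : (size (cheb (R := R) n.+2) <= N.+1)%N.
  rewrite cheb_rec; apply: leq_trans (size_polyD _ _) _.
  rewrite size_polyN geq_max (leq_trans h0) // andbT.
  apply: leq_trans (size_polyMleq _ _) _.
  have := size_scale_leq (2%:R : R) ('X : {poly R}); rewrite size_polyX => hs.
  rewrite -subn1 leq_subLR; apply: leq_trans (leq_add hs h1) _; lia.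
rewrite /cheb_Td_delta (poly_opE _ _ _ _ _ _ h2) (poly_opE _ _ _ _ x _ (leqW h0)).
rewrite (Td_ext _ _ _ _ _ (fun y => poly_opE _ _ _ _ y _ h1)) Td_lin.
rewrite cheb_rec.
under eq_bigr => i _ do rewrite coefB -scalerAl coefZ coefXM mulrBl.
rewrite sumrB; congr (_ - _).
rewrite big_ord_recl eqxx mulr0 mul0r add0r; apply: eq_bigr => i _.
by rewrite lift0 /=; field.
Qed.

Definition e (R : rcfType) (d m k : nat) : R :=
  if odd (m + k) then 0 else if (m < k)%N then 0
  else if (k < m)%N then 1 - d%:R else 1.

Lemma E1 (R : rcfType) d p j :
  e R d p.+2 j + d%:R * e R d p.+2 j.+2 - d%:R * e R d p.+1 j.+1 = e R d p.+3 j.+1.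
Proof.
rewrite /e !addSn !addnS /= !negbK.
case: (odd (p + j)); first by rewrite !mulr0 subr0 addr0.
rewrite !ltnS.
repeat (case: ifP => ?); try (exfalso; lia); ring.
Qed.

Lemma E0 (R : rcfType) d p :
  d.+1%:R * e R d p.+2 1 - d%:R * e R d p.+1 0 = e R d p.+3 0.
Proof.
rewrite /e !addn0 !addn1 /= !negbK.
case: (odd p) => /=; rewrite -?natr1; ring.
Qed.

Lemma alg1 (R : rcfType) (s D a b c r : R) p : s != 0 -> s ^+ 2 = D ->
  a + D * b - D * c = r ->
  s^-1 * (a / (2%:R * s ^+ p.+2) + D * (b / (2%:R * s ^+ p.+2)))
   - c / (2%:R * s ^+ p.+1) = r / (2%:R * s ^+ p.+3).
Proof.
move=> s0 <- <-; have sp : s ^+ p != 0 by rewrite expf_neq0.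
rewrite !exprS; field; rewrite sp s0 /=; by [].
Qed.

Lemma alg0 (R : rcfType) (s D a c r : R) p : s != 0 -> s ^+ 2 = D ->
  (D + 1) * a - D * c = r ->
  s^-1 * ((D + 1) * (a / (2%:R * s ^+ p.+2)))
   - c / (2%:R * s ^+ p.+1) = r / (2%:R * s ^+ p.+3).
Proof.
move=> s0 <- <-; have sp : s ^+ p != 0 by rewrite expf_neq0.
rewrite !exprS; field; rewrite sp s0 /=; by [].
Qed.

Lemma Q0 (R : rcfType) d x : cheb_Td_delta (R := R) d 0 x = delta0 x.
Proof.
rewrite /cheb_Td_delta (poly_opE _ _ _ _ _ 1%N); last by rewrite size_polyC oner_neq0.
by rewrite big_ord1 /= coefC /= mul1r.
Qed.

Lemma Q1 (R : rcfType) d x : cheb_Td_delta (R := R) d 1 x = Td d delta0 x / 2%:R.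
Proof.
rewrite /cheb_Td_delta (poly_opE _ _ _ _ _ 2%N); last by rewrite size_polyX.
by rewrite !big_ord_recr big_ord0 /= !coefX /= mul0r !add0r mul1r.
Qed.

Definition qf (R : rcfType) d m k : R :=
  e R d m k / (2%:R * (Num.sqrt (d%:R : R)) ^+ m).

Lemma e_gt (R : rcfType) d m k : (m < k)%N -> e R d m k = 0.
Proof. by move=> h; rewrite /e h; case: odd. Qed.

Lemma main (R : rcfType) d (hd : (0 < d)%N) n x : tree_vertex d x ->
  cheb_Td_delta (R := R) d n.+1 x = qf R d n.+1 (size x).
Proof.
have s0 : Num.sqrt (d%:R : R) != 0 by rewrite gt_eqF // sqrtr_gt0 ltr0n.
have hs : Num.sqrt (d%:R : R) ^+ 2 = d%:R by rewrite sqr_sqrtr // ler0n.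
suff: (forall x, tree_vertex d x -> cheb_Td_delta (R := R) d n.+1 x = qf R d n.+1 (size x))
   /\ (forall x, tree_vertex d x -> cheb_Td_delta (R := R) d n.+2 x = qf R d n.+2 (size x)).
  by case=> h _; apply: h.
pose g0 : nat -> R := fun k => if k == 0%N then 1 else 0.
have hQ0 : forall y, tree_vertex d y -> delta0 y = g0 (size y).
  by move=> y _; rewrite /delta0 /g0 size_eq0.
have hQ1 : forall y, tree_vertex d y -> cheb_Td_delta (R := R) d 1 y = qf R d 1 (size y).
  move=> y hy; rewrite Q1 (Td_radial _ _ _ g0 _ hy hQ0).
  case: y hy => [|a t] hy; rewrite /g0 /=.
    by rewrite /qf /e /= !mulr0 !mul0r.
  case: (size t) => [|j] /=.
    by rewrite /qf /e /= mulr0 addr0 mulr1 expr1; field.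
  by rewrite /qf e_gt // mulr0 addr0 mulr0 !mul0r.
elim: n => [|n [IH1 IH2]].
  split=> // y hy; rewrite Q_rec (Td_radial _ _ _ _ _ hy hQ1) Q0 (hQ0 _ hy).
  case: y hy => [|a t] hy; rewrite /g0 /=.
    rewrite /qf /e /= -natr1.
    move: (Num.sqrt (d%:R : R)) s0 hs => s s0' <-; field; by rewrite s0'.
  rewrite /qf (@e_gt _ _ 1 (size t).+2) // !mul0r mulr0 subr0 addr0.
  case: (size t) => [|[|j]].
  - by rewrite /e /= !mul0r mulr0.
  - rewrite /e /=; move: (Num.sqrt (d%:R : R)) s0 hs => s s0' _; field; by rewrite s0'.
  - by rewrite !e_gt // !mul0r mulr0.
split=> // y hy; rewrite Q_rec (Td_radial _ _ _ _ _ hy IH2) (IH1 _ hy).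
case: y hy => [|a t] hy /=.
  rewrite /qf -natr1; apply: alg0 => //; rewrite natr1; exact: E0.
rewrite /qf; apply: alg1 => //; exact: E1.
Qed.

Lemma e_bound (R : rcfType) d m k : `|e R d m k| <= d%:R + 1.
Proof.
have d0 : (0 : R) <= d%:R by rewrite ler0n.
rewrite /e; repeat case: ifP => _; rewrite ?normr0 ?normr1; try lra.
rewrite ler_norml; apply/andP; split; lra.
Qed.

Theorem lemma1 (R : rcfType) (d : nat) (hd : (0 < d)%N) :
  (forall (n : nat), (0 < n)%N -> ~~ odd n ->
   forall x : seq nat, tree_vertex d x ->
     cheb_Td_delta (R := R) d n x =
       if odd (size x) || (n < size x)%N then 0
       else if (size x < n)%N then (1 - d%:R) / (2%:R * d%:R ^+ (n./2))
       else 1 / (2%:R * d%:R ^+ (n./2)))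
  /\
  (exists C : R, forall (n : nat), (0 < n)%N -> ~~ odd n ->
     forall x : seq nat, tree_vertex d x ->
       `|cheb_Td_delta (R := R) d n x| <= C / d%:R ^+ (n./2)).
Proof.
have hs : Num.sqrt (d%:R : R) ^+ 2 = d%:R by rewrite sqr_sqrtr // ler0n.
have hpow : forall n, ~~ odd n -> Num.sqrt (d%:R : R) ^+ n = d%:R ^+ n./2.
  move=> n hn; rewrite -{1}(odd_double_half n) (negbTE hn) add0n -muln2 mulnC.
  by rewrite exprM hs.
have hval : forall n, (0 < n)%N -> ~~ odd n -> forall x, tree_vertex d x ->
    cheb_Td_delta (R := R) d n x = e R d n (size x) / (2%:R * d%:R ^+ n./2).
  move=> n n0 hn x hx; rewrite -(prednK n0) main // prednK // /qf hpow //.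
have Dp : forall n, (0 : R) < d%:R ^+ n by move=> n; rewrite exprn_gt0 // ltr0n.
split.
  move=> n n0 hn x hx; rewrite hval // /e oddD (negbTE hn) /=.
  case: ifP => _ /=; first by rewrite !mul0r.
  by case: ifP => _ /=; [rewrite mul0r | case: ifP].
exists ((d%:R + 1) / 2%:R) => n n0 hn x hx; rewrite hval //.
have D0 := Dp n./2.
rewrite normrM normfV [`|2%:R * _|]ger0_norm; last by rewrite mulr_ge0 // ltW.
have -> : (d%:R + 1) / 2%:R / d%:R ^+ n./2 = (d%:R + 1) / (2%:R * d%:R ^+ n./2 : R).
  by field; rewrite gt_eqF.
apply: ler_wpM2r; last exact: e_bound.
by rewrite invr_ge0 mulr_ge0 // ltW.
Qed.
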